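(* Let $\rho$ be a bipartite density matrix on $\mathbb{C}^n\otimes\mathbb{C}^m$ such that its partial transpose $\rho^{PT}$ is not positive semidefinite. Then $\rho$ can be converted by local quantum operations and classical communication (LQ+CC) into a density matrix $\rho_{bc}$ on $\mathbb{C}^d\otimes\mathbb{C}^d$, for some $d\le\min(n,m)$ and some real parameters $b,c$, such that $\rho_{bc}^{PT}$ is not positive semidefinite, where $$\rho_{bc}=a\sum_{i=0}^{d-1}|ii\rangle\langle ii|+b\sum_{0\le i<j\le d-1}|\psi^-_{ij}\rangle\langle\psi^-_{ij}|+c\sum_{0\le i<j\le d-1}|\psi^+_{ij}\rangle\langle\psi^+_{ij}|,\qquad da+(b+c)\frac{d(d-1)}{2}=1.$$
   Context: $\{|i\rangle\}$ is an orthonormal basis of $\mathbb{C}^d$ and $|\psi^{\pm}_{ij}\rangle=\frac{1}{\sqrt2}(|ij\rangle\pm|ji\rangle)$. The partial transpose (applied to the second factor, Bob's) is defined by $\langle ij|\rho^{PT}|kl\rangle=\langle il|\rho|kj\rangle$; whether $\rho^{PT}\ge0$ does not depend on the basis used. LQ+CC operations are arbitrary sequences of local quantum operations by each party (appending ancillas, local unitaries, local measurements/filters with postselection on outcomes, discarding subsystems, local projections) together with classical communication between the parties. *)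

(* Defs.v *)
From HB Require Import structures.
From mathcomp Require Import all_boot all_order all_algebra.
From mathcomp Require Import mxtens complex.
From mathcomp Require Import reals.
Set Implicit Arguments.
Unset Strict Implicit.
Unset Printing Implicit Defensive.
Import Order.TTheory GRing.Theory Num.Theory.
Local Open Scope ring_scope.

(* Conventions: a bipartite operator on C^n (x) C^m is a matrix indexed by
   'I_(n*m), where the basis vector |i j> (i : 'I_n, j : 'I_m) has index
   mxtens_index (i, j) = i*m + j, and A *t B is the Kronecker product. *)

Section QDefs.
Variable C : numClosedFieldType.

Definition adjmx (p q : nat) (A : 'M[C]_(p, q)) : 'M[C]_(q, p) :=
  (map_mx Num.conj A)^T.

Definition hermitian_mx (N : nat) (A : 'M[C]_N) : Prop := adjmx A = A.

Definition psd (N : nat) (A : 'M[C]_N) : Prop :=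
  hermitian_mx A /\ forall v : 'cV[C]_N, 0 <= (adjmx v *m A *m v) 0 0.

Definition density (N : nat) (A : 'M[C]_N) : Prop := psd A /\ \tr A = 1.

(* partial transpose on Bob's (second) factor:
   <ij| A^PT |kl> = <il| A |kj> *)
Definition ptrans (n m : nat) (A : 'M[C]_(n * m)) : 'M[C]_(n * m) :=
  \matrix_(p, q)
    A (mxtens_index ((mxtens_unindex p).1, (mxtens_unindex q).2))
      (mxtens_index ((mxtens_unindex q).1, (mxtens_unindex p).2)).

Definition ket (n m : nat) (i : 'I_n) (j : 'I_m) : 'cV[C]_(n * m) :=
  delta_mx (mxtens_index (i, j)) 0.

Definition proj (N : nat) (v : 'cV[C]_N) : 'M[C]_N := v *m adjmx v.

(* rho_bc = a sum_i |ii><ii| + b sum_{i<j} |psi-_ij><psi-_ij|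
            + c sum_{i<j} |psi+_ij><psi+_ij|,
   with |psi+-_ij> = (|ij> +- |ji>)/sqrt 2, so |psi><psi| = 1/2 proj(|ij> +- |ji>) *)
Definition rho_abc (d : nat) (a b c : C) : 'M[C]_(d * d) :=
  a *: (\sum_(i < d) proj (ket i i))
  + b *: (\sum_(i < d) \sum_(j < d | (i < j)%N) (2^-1 *: proj (ket i j - ket j i)))
  + c *: (\sum_(i < d) \sum_(j < d | (i < j)%N) (2^-1 *: proj (ket i j + ket j i))).

(* LQ+CC protocols (with postselection), acting on unnormalized operators.
   A protocol is a finite tree: at each node one party performs a local
   operation with (arbitrary, finitely many) Kraus operators K_i mapping its
   current local space into a new one (this covers appending ancillas,
   local unitaries, local measurements/filters, local projections and
   discarding subsystems); the outcome i is communicated classically and the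
   remaining protocol L i may depend on it.  Outcomes may be postselected
   (simply omitted from the family) or forgotten (summed).  Since the final
   state is renormalized, the overall scale of the Kraus operators is
   irrelevant, so no completeness condition is imposed. *)
Inductive locc : forall (n m n' m' : nat),
    ('M[C]_(n * m) -> 'M[C]_(n' * m')) -> Prop :=
| locc_done (n m : nat) : @locc n m n m id
| locc_alice (n m n1 n' m' k : nat) (K : 'I_k -> 'M[C]_(n1, n))
    (L : 'I_k -> 'M[C]_(n1 * m) -> 'M[C]_(n' * m')) :
    (forall i, @locc n1 m n' m' (L i)) ->
    @locc n m n' m' (fun rho => \sum_(i < k)
       L i ((K i *t (1%:M : 'M[C]_m)) *m rho *m adjmx (K i *t (1%:M : 'M[C]_m))))
| locc_bob (n m m1 n' m' k : nat) (K : 'I_k -> 'M[C]_(m1, m))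
    (L : 'I_k -> 'M[C]_(n * m1) -> 'M[C]_(n' * m')) :
    (forall i, @locc n m1 n' m' (L i)) ->
    @locc n m n' m' (fun rho => \sum_(i < k)
       L i (((1%:M : 'M[C]_n) *t K i) *m rho *m adjmx ((1%:M : 'M[C]_n) *t K i))).

End QDefs.

Definition rC (R : rcfType) (x : R) : R[i] := (x%:C)%C.

(* Main.v *)
Require Import Defs.
From HB Require Import structures.
From mathcomp Require Import all_boot all_order all_algebra.
From mathcomp Require Import mxtens complex.
From mathcomp Require Import reals.
From Stdlib Require Import Classical.
From mathcomp Require Import ring.
From mathcomp Require Import fingroup perm.
Import Order.TTheory GRing.Theory Num.Theory.
Local Open Scope ring_scope.
Set Implicit Arguments.
Unset Strict Implicit.
Unset Printing Implicit Defensive.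
Section Gen.
Variable C : numClosedFieldType.
Local Notation idx := mxtens_index.

Lemma adjmxE p q (A : 'M[C]_(p, q)) i j : adjmx A i j = (A j i)^*.
Proof. by rewrite !mxE. Qed.

Lemma adjmx_mul p q r (A : 'M[C]_(p, q)) (B : 'M[C]_(q, r)) :
  adjmx (A *m B) = adjmx B *m adjmx A.
Proof. by rewrite /adjmx map_mxM trmx_mul. Qed.

Lemma adjmxK p q (A : 'M[C]_(p, q)) : adjmx (adjmx A) = A.
Proof. by apply/matrixP=> i j; rewrite !adjmxE conjCK. Qed.

Lemma adjmxD p q (A B : 'M[C]_(p, q)) : adjmx (A + B) = adjmx A + adjmx B.
Proof. by apply/matrixP=> i j; rewrite !mxE rmorphD. Qed.

Lemma adjmxZ p q c (A : 'M[C]_(p, q)) : adjmx (c *: A) = c^* *: adjmx A.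
Proof. by apply/matrixP=> i j; rewrite !mxE rmorphM. Qed.

Lemma adjmx_sum p q I (r : seq I) (P : pred I) (F : I -> 'M[C]_(p, q)) :
  adjmx (\sum_(i <- r | P i) F i) = \sum_(i <- r | P i) adjmx (F i).
Proof.
elim/big_rec2: _ => [|i A B _ <-]; first by apply/matrixP=> i j; rewrite !mxE rmorph0.
by rewrite adjmxD.
Qed.

Lemma adjmx1 p : adjmx (1%:M : 'M[C]_p) = 1%:M.
Proof. by apply/matrixP=> i j; rewrite !mxE eq_sym; case: eqP; rewrite ?rmorph1 ?rmorph0. Qed.

Lemma quadE N (v : 'cV[C]_N) (A : 'M[C]_N) :
  (adjmx v *m A *m v) 0 0 = \sum_p \sum_q (v p 0)^* * A p q * v q 0.
Proof.
rewrite mxE; rewrite exchange_big /=; apply: eq_bigr => q _.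
rewrite mxE big_distrl /=; apply: eq_bigr => p _; by rewrite adjmxE.
Qed.

Lemma psd_herm N (A : 'M[C]_N) : psd A -> forall i j, A j i = (A i j)^*.
Proof. by case=> H _ i j; rewrite -{1}H adjmxE. Qed.

Lemma psd_congr p q (K : 'M[C]_(p, q)) (A : 'M[C]_q) :
  psd A -> psd (K *m A *m adjmx K).
Proof.
case=> H Hv; split.
  by rewrite /hermitian_mx !adjmx_mul adjmxK H mulmxA.
move=> v; have := Hv (adjmx K *m v).
by rewrite adjmx_mul adjmxK !mulmxA.
Qed.

Lemma psd0 N : psd (0 : 'M[C]_N).
Proof.
split; first by apply/matrixP=> i j; rewrite !mxE rmorph0.
by move=> v; rewrite mulmx0 mul0mx mxE.
Qed.

Lemma psdD N (A B : 'M[C]_N) : psd A -> psd B -> psd (A + B).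
Proof.
case=> HA vA [HB vB]; split; first by rewrite /hermitian_mx adjmxD HA HB.
by move=> v; rewrite mulmxDr mulmxDl mxE addr_ge0.
Qed.

Lemma psd_sum N I (r : seq I) (P : pred I) (F : I -> 'M[C]_N) :
  (forall i, P i -> psd (F i)) -> psd (\sum_(i <- r | P i) F i).
Proof.
move=> H; elim/big_rec: _ => [|i A Pi HA]; first exact: psd0.
exact: psdD (H _ Pi) HA.
Qed.

Lemma psdZ N c (A : 'M[C]_N) : 0 <= c -> psd A -> psd (c *: A).
Proof.
move=> c0 [HA vA]; split.
  by rewrite /hermitian_mx adjmxZ HA conj_Creal // ger0_real.
by move=> v; rewrite -scalemxAr -scalemxAl mxE mulr_ge0.
Qed.

Lemma sum_dl (T : finType) (a : T) (F : T -> C) :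
  \sum_i ((i == a)%:R * F i) = F a.
Proof.
rewrite (bigD1 a) //= eqxx mul1r big1 ?addr0 // => i /negPf ->.
by rewrite mul0r.
Qed.

Lemma sum_dr (T : finType) (a : T) (F : T -> C) :
  \sum_i (F i * (i == a)%:R) = F a.
Proof. by rewrite -[RHS](sum_dl a); apply: eq_bigr => i _; rewrite mulrC. Qed.

Lemma deltaE N (i p : 'I_N) : (delta_mx i 0 : 'cV[C]_N) p 0 = (p == i)%:R.
Proof. by rewrite mxE andbT. Qed.

Lemma psd_diag N (A : 'M[C]_N) i : psd A -> 0 <= A i i.
Proof.
case=> _ vA; have := vA (delta_mx i 0); rewrite quadE.
under eq_bigr => p _ do under eq_bigr => q _ do rewrite !deltaE.
under eq_bigr => p _ do rewrite (eq_bigr (fun q => ((p == i)%:R)^* * A p q * (q == i)%:R)) // sum_dr.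
by under eq_bigr => p _ do rewrite rmorph_nat; rewrite sum_dl.
Qed.

End Gen.
Section Gen2.
Variable C : numClosedFieldType.
Local Notation idx := mxtens_index.

Lemma sum_idx n m (F : 'I_(n * m) -> C) :
  \sum_r F r = \sum_(i < n) \sum_(j < m) F (idx (i, j)).
Proof.
rewrite pair_big /= (reindex (@mxtens_index n m)) /=.
  by apply: eq_bigr => -[i j] _.
by exists (@mxtens_unindex n m) => r _; rewrite (mxtens_indexK, mxtens_unindexK).
Qed.

Lemma conj_entry p q (M : 'M[C]_(p, q)) (Y : 'M[C]_q) i k :
  (M *m Y *m adjmx M) i k = \sum_r \sum_s M i r * Y r s * (M k s)^*.
Proof.
rewrite mxE exchange_big /=; apply: eq_bigr => s _.
by rewrite mxE big_distrl /=; apply: eq_bigr => r _; rewrite adjmxE.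
Qed.

Lemma ptransE n m (X : 'M[C]_(n * m)) a b c e :
  ptrans X (idx (a, b)) (idx (c, e)) = X (idx (a, e)) (idx (c, b)).
Proof. by rewrite mxE !mxtens_indexK. Qed.

Definition fsum d (X : 'M[C]_(d * d)) :=
  \sum_(k < d) \sum_(l < d) X (idx (k, l)) (idx (l, k)).

Lemma ketE n m (i : 'I_n) (j : 'I_m) a b :
  (ket C i j) (idx (a, b)) 0 = ((a == i) && (b == j))%:R.
Proof.
rewrite mxE andbT; congr (_%:R).
by rewrite (inj_eq (can_inj (@mxtens_indexK n m))) xpair_eqE.
Qed.

Definition vPhi d : 'cV[C]_(d * d) := \sum_(k < d) ket C k k.

Lemma vPhiE d a b : vPhi d (idx (a, b)) 0 = (a == b)%:R.
Proof.
rewrite /vPhi summxE (eq_bigr (fun k => (a == k)%:R * (b == k)%:R)).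
  rewrite (eq_bigr (fun k => (k == a)%:R * (b == k)%:R)) ?sum_dl 1?eq_sym //.
  by move=> k _; rewrite eq_sym.
by move=> k _; rewrite ketE -natrM mulnb.
Qed.

Lemma quad_ptrans d (X : 'M[C]_(d * d)) :
  (adjmx (vPhi d) *m ptrans X *m vPhi d) 0 0 = fsum X.
Proof.
rewrite quadE sum_idx /fsum; apply: eq_bigr => k _.
rewrite (bigD1 k) //= [Z in _ + Z]big1 => [|l /negPf kl]; last first.
  by rewrite big1 // => q _; rewrite vPhiE eq_sym kl rmorph0 !mul0r.
rewrite addr0 vPhiE eqxx mulr1n rmorph1.
under eq_bigr => q _ do rewrite mul1r.
rewrite sum_idx; apply: eq_bigr => l _.
rewrite (bigD1 l) //= [Z in _ + Z]big1 => [|j /negPf lj]; last by rewrite vPhiE eq_sym lj mulr0.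
by rewrite addr0 vPhiE eqxx mulr1n mulr1 ptransE.
Qed.

Lemma ptrans_herm n m (X : 'M[C]_(n * m)) : hermitian_mx X -> hermitian_mx (ptrans X).
Proof.
move=> H; apply/matrixP => p q; rewrite adjmxE !mxE.
by rewrite -{2}H adjmxE.
Qed.

Lemma quad_real N (A : 'M[C]_N) (v : 'cV[C]_N) : hermitian_mx A -> (adjmx v *m A *m v) 0 0 \is Num.real.
Proof.
move=> H; apply/CrealP.
have: adjmx (adjmx v *m A *m v) = adjmx v *m A *m v.
  by rewrite !adjmx_mul adjmxK H mulmxA.
by move/matrixP/(_ 0 0); rewrite adjmxE.
Qed.

Lemma npt_vec N (A : 'M[C]_N) : hermitian_mx A -> ~ psd A ->
  exists v : 'cV[C]_N, (adjmx v *m A *m v) 0 0 < 0.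
Proof.
move=> H nP; case: (classic (exists v : 'cV[C]_N, (adjmx v *m A *m v) 0 0 < 0)) => // nex.
exfalso; apply: nP; split => // v.
have Hv : ~~ ((adjmx v *m A *m v) 0 0 < 0) by apply/negP => h; apply: nex; exists v.
move: Hv; have := quad_real v H.
by rewrite realE => /orP[//|]; rewrite le_eqVlt => /orP[/eqP->|->].
Qed.

End Gen2.
Section Phase.
Variable C : numClosedFieldType.

Definition om (y : 'I_4) : C := 'i ^+ y.

Lemma omK y : om y * (om y)^* = 1.
Proof.
rewrite /om rmorphXn -exprMn /= conjCi mulrN -expr2 sqrCi opprK expr1n //.
Qed.

Lemma omS y : om (ordS y) = 'i * om y.
Proof.
have i4 : ('i : C) ^+ 4 = 1 by rewrite (exprM _ 2 2) sqrCi -signr_odd /= expr0 //.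
by case: y => [[|[|[|[|y]]]] //= Hy]; rewrite /om /= ?expr0 ?exprS ?expr0 ?mulr1 //;
  rewrite -?exprS ?i4 //; rewrite -!exprS i4.
Qed.

Definition ms d (i j k l : 'I_d) := ((i == k) && (j == l)) || ((i == l) && (j == k)).

Definition cnt d (i j p : 'I_d) := ((i == p) + (j == p))%N.

Lemma ms_cnt d (i j k l : 'I_d) : ~~ ms i j k l -> exists p, cnt i j p != cnt k l p.
Proof.
move=> nms; case: (pickP (fun p => cnt i j p != cnt k l p)) => [p Hp|H]; first by exists p.
exfalso; move: nms; rewrite /ms.
have /eqP Hi := negbFE (H i); have /eqP Hj := negbFE (H j); rewrite /cnt in Hi Hj.
case: (eqVneq k i) => [ki|ki].
  subst k; have lj : l = j by move: Hj; rewrite eqxx; case: (i == j); case: eqP.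
  by rewrite lj eqxx.
have li : l = i by move: Hi; rewrite eqxx (negPf ki); case: (j == i); case: eqP.
subst l; have kj : k = j by move: Hj; rewrite eqxx; case: (i == j); case: eqP.
by rewrite kj !eqxx orbT.
Qed.

Definition sh d (p : 'I_d) (x : {ffun 'I_d -> 'I_4}) : {ffun 'I_d -> 'I_4} :=
  [ffun q => if q == p then ordS (x q) else x q].

Lemma sh_inj d (p : 'I_d) : injective (sh p).
Proof.
move=> x y /ffunP H; apply/ffunP => q; have := H q; rewrite !ffunE.
by case: (q == p) => // /ordS_inj.
Qed.

Lemma om_sh d (p : 'I_d) x q : om (sh p x q) = 'i ^+ (q == p) * om (x q).
Proof. by rewrite ffunE; case: (q == p); rewrite ?omS ?expr1 ?expr0 ?mul1r. Qed.

Lemma i_pow_ne (a b : nat) : (a <= 2)%N -> (b <= 2)%N -> a != b ->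
  ('i : C) ^+ a * ('i^*) ^+ b != 1.
Proof.
have i_ne1 : ('i : C) != 1.
  apply/eqP => h; have := sqrCi C; rewrite h expr1n => /eqP.
  by rewrite -subr_eq0 opprK gt_eqF // addr_gt0 ?ltr01.
have m1 : (-1 : C) != 1 by rewrite -subr_eq0 -opprD oppr_eq0 gt_eqF // addr_gt0 ?ltr01.
have ni : (- 'i : C) != 1.
  apply/eqP => h; have := sqrCi C; rewrite -sqrrN h expr1n => /eqP.
  by rewrite -subr_eq0 opprK gt_eqF // addr_gt0 ?ltr01.
rewrite conjCi.
case: a => [|[|[|//]]]; case: b => [|[|[|//]]] //= _ _ _;
  rewrite ?expr0 ?expr1 ?mul1r ?mulr1 -?expr2 ?sqrCi ?sqrrN ?sqrCi //.
- by rewrite mulrN1.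
- by rewrite mulN1r opprK.
Qed.

Lemma phase_sum d (i j k l : 'I_d) :
  \sum_(x : {ffun 'I_d -> 'I_4}) om (x i) * om (x j) * (om (x k))^* * (om (x l))^*
  = (ms i j k l)%:R * #|{: {ffun 'I_d -> 'I_4}}|%:R.
Proof.
case: (boolP (ms i j k l)) => Hms.
  rewrite mul1r -sumr_const; apply: eq_bigr => x _.
  case/orP: Hms => /andP[/eqP<- /eqP<-].
    transitivity ((om (x i) * (om (x i))^*) * (om (x j) * (om (x j))^*)); first by ring.
    by rewrite !omK mulr1.
  transitivity ((om (x i) * (om (x i))^*) * (om (x j) * (om (x j))^*)); first by ring.
  by rewrite !omK mulr1.
rewrite mul0r; have [p Hp] := ms_cnt Hms.
set S := \sum_x _.
have HS : S = ('i ^+ cnt i j p * ('i^*) ^+ cnt k l p) * S.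
  rewrite {1}/S (reindex_inj (@sh_inj d p)) /= /S big_distrr /=.
  apply: eq_bigr => x _; rewrite !om_sh !rmorphM !rmorphXn /cnt !exprD.
  by ring.
have ne := @i_pow_ne (cnt i j p) (cnt k l p).
have : (1 - ('i ^+ cnt i j p * ('i^*) ^+ cnt k l p)) * S = 0 by rewrite mulrBl mul1r -HS subrr.
move/eqP; rewrite mulf_eq0 subr_eq0 eq_sym => /orP[|/eqP //].
by rewrite (negPf (ne _ _ Hp)) // /cnt; case: (i == p); case: (j == p); case: (k == p); case: (l == p).
Qed.

End Phase.
Section Twirl.
Variable C : numClosedFieldType.
Local Notation idx := mxtens_index.
Local Notation om := (@om C).

Definition G d := prod {perm 'I_d} {ffun 'I_d -> 'I_4}.
Definition Umx d (g : G d) : 'M[C]_d := \matrix_(a, i) ((a == g.1 i)%:R * om (g.2 i)).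
Definition MU d (g : G d) : 'M[C]_(d * d) := Umx g *t Umx g.
Definition twirl d (Y : 'M[C]_(d * d)) : 'M[C]_(d * d) :=
  \sum_(g : G d) (MU g *m Y *m adjmx (MU g)).

Lemma sumU d (g : G d) a (F : 'I_d -> C) :
  \sum_i (Umx g a i * F i) = om (g.2 ((g.1^-1)%g a)) * F ((g.1^-1)%g a).
Proof.
under eq_bigr => i _ do rewrite mxE eq_sym (canF_eq (permK _)) -mulrA.
by rewrite sum_dl.
Qed.

Lemma sumUc d (g : G d) a (F : 'I_d -> C) :
  \sum_i ((Umx g a i)^* * F i) = (om (g.2 ((g.1^-1)%g a)))^* * F ((g.1^-1)%g a).
Proof.
under eq_bigr => i _ do rewrite mxE rmorphM rmorph_nat eq_sym (canF_eq (permK _)) -mulrA.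
by rewrite sum_dl.
Qed.

Lemma conjU_entry d (g : G d) (Y : 'M[C]_(d * d)) a b c e :
  (MU g *m Y *m adjmx (MU g)) (idx (a, b)) (idx (c, e)) =
  let s := (g.1^-1)%g in
  om (g.2 (s a)) * (om (g.2 (s b)) * ((om (g.2 (s c)))^* * ((om (g.2 (s e)))^* *
     Y (idx (s a, s b)) (idx (s c, s e))))).
Proof.
transitivity (\sum_i (Umx g a i * \sum_j (Umx g b j * \sum_k ((Umx g c k)^* *
   \sum_l ((Umx g e l)^* * Y (idx (i, j)) (idx (k, l))))))).
  rewrite conj_entry sum_idx; apply: eq_bigr => i _.
  rewrite big_distrr /=; apply: eq_bigr => j _.
  rewrite sum_idx mulrA big_distrr /=; apply: eq_bigr => k _.
  rewrite mulrA big_distrr /=; apply: eq_bigr => l _.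
  rewrite /MU !tensmxE rmorphM; ring.
by rewrite sumU sumU sumUc sumUc.
Qed.

Lemma sum_pair (T1 T2 : finType) (F : T1 * T2 -> C) :
  \sum_(g : T1 * T2) F g = \sum_(t1 : T1) \sum_(t2 : T2) F (t1, t2).
Proof. by rewrite pair_big; apply: eq_bigr => -[]. Qed.

Definition Gs d (Y : 'M[C]_(d * d)) (a b c e : 'I_d) :=
  \sum_(s : {perm 'I_d}) Y (idx (s a, s b)) (idx (s c, s e)).

Definition N4 d : C := #|{: {ffun 'I_d -> 'I_4}}|%:R.

Lemma twirlE d (Y : 'M[C]_(d * d)) a b c e :
  twirl Y (idx (a, b)) (idx (c, e)) = (ms a b c e)%:R * N4 d * Gs Y a b c e.
Proof.
rewrite /twirl summxE sum_pair /Gs big_distrr /=.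
rewrite (reindex_inj (@invg_inj _)) /=; apply: eq_bigr => s _.
under eq_bigr => x _ do rewrite conjU_entry /= !mulrA.
rewrite -big_distrl /= phase_sum invgK.
congr (_ * _ * _); congr (_%:R); rewrite /ms.
by rewrite !(inj_eq (@perm_inj _ s)).
Qed.

End Twirl.
Section Form.
Variable C : numClosedFieldType.
Local Notation idx := mxtens_index.

Lemma Gs_inv d (Y : 'M[C]_(d * d)) (t : {perm 'I_d}) a b c e :
  Gs Y (t a) (t b) (t c) (t e) = Gs Y a b c e.
Proof.
rewrite /Gs [RHS](reindex_inj (@mulgI _ t)) /=.
by apply: eq_bigr => s _; rewrite !permM.
Qed.

Lemma perm2 d (a b a' b' : 'I_d) : a != b -> a' != b' ->
  exists t : {perm 'I_d}, t a = a' /\ t b = b'.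
Proof.
move=> ab ab'; set t1 := tperm a a'; set b1 := t1 b.
have a'b1 : a' != b1 by rewrite /b1 -{1}(tpermL a a') (inj_eq (@perm_inj _ t1)).
exists (t1 * tperm b1 b')%g; rewrite !permM tpermL tpermL; split => //.
by rewrite tpermD // eq_sym.
Qed.

Definition formE d (a b c e : 'I_d) (A P Q : C) :=
  ((a == b) && (c == a) && (e == a))%:R * A
  + ((a != b) && (c == a) && (e == b))%:R * P
  + ((a != b) && (c == b) && (e == a))%:R * Q.

Definition form d (A P Q : C) : 'M[C]_(d * d) :=
  \matrix_(p, q) formE (mxtens_unindex p).1 (mxtens_unindex p).2
                       (mxtens_unindex q).1 (mxtens_unindex q).2 A P Q.

Lemma formI d (A P Q : C) a b c e : form d A P Q (idx (a, b)) (idx (c, e)) = formE a b c e A P Q.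
Proof. by rewrite mxE !mxtens_indexK. Qed.

Lemma twirl_form d (Y : 'M[C]_(d.+2 * d.+2)) :
  let o0 := (ord0 : 'I_d.+2) in let o1 := (lift ord0 ord0 : 'I_d.+2) in
  twirl Y = form d.+2 (N4 C d.+2 * Gs Y o0 o0 o0 o0) (N4 C d.+2 * Gs Y o0 o1 o0 o1)
                      (N4 C d.+2 * Gs Y o0 o1 o1 o0).
Proof.
move=> o0 o1; apply/matrixP => p q.
case: (mxtens_indexP p) => a b; case: (mxtens_indexP q) => c e.
rewrite twirlE formI /formE /ms [a == c]eq_sym [a == e]eq_sym [b == e]eq_sym [b == c]eq_sym.
have o01 : o0 != o1 by [].
case: (eqVneq a b) => [<-|ab].
  have h := Gs_inv Y (tperm o0 a) o0 o0 o0 o0; rewrite tpermL in h.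
  case: (eqVneq c a) => [->|ca]; case: (eqVneq e a) => [->|ea];
    rewrite /= ?mulr0n ?mulr1n ?mul0r ?mul1r ?add0r ?addr0 ?mulr0 //.
  by rewrite h.
have ba : b != a by rewrite eq_sym.
have [t [ta tb]] := perm2 o01 ab.
have h1 := Gs_inv Y t o0 o1 o0 o1; have h2 := Gs_inv Y t o0 o1 o1 o0; rewrite ta tb in h1 h2.
rewrite /=.
case: (eqVneq c a) => [->|ca].
  rewrite ?(negPf ab) ?(negPf ba) /= ?andbF ?mulr0n ?mul0r ?addr0 ?add0r orbF.
  case: (eqVneq e b) => [->|eb]; rewrite /= ?mulr0n ?mulr1n ?mul0r ?mul1r ?add0r ?addr0 ?mulr0 //.
  by rewrite h1.
rewrite /= ?mulr0n ?mul0r ?add0r.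
case: (eqVneq c b) => [->|cb]; case: (eqVneq e a) => [->|ea];
  rewrite /= ?mulr0n ?mulr1n ?mul0r ?mul1r ?add0r ?addr0 ?mulr0 ?andbF //.
by rewrite h2.
Qed.

Lemma fsum_twirl d (Y : 'M[C]_(d * d)) :
  fsum (twirl Y) = N4 C d * (#|{: {perm 'I_d}}|%:R * fsum Y).
Proof.
rewrite /fsum.
under eq_bigr => k _ do under eq_bigr => l _ do rewrite twirlE /ms !eqxx orbT mulr1n mul1r.
under eq_bigr => k _ do rewrite -big_distrr /=.
rewrite -big_distrr /=; congr (_ * _).
rewrite /Gs.
under eq_bigr => k _ do rewrite exchange_big /=.
rewrite exchange_big /=.
rewrite [RHS]mulr_natl -sumr_const; apply: (eq_big _ _ (fun _ => erefl)) => s _.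
rewrite [RHS](reindex_inj (@perm_inj _ s)) /=; apply: eq_bigr => k _.
by rewrite [RHS](reindex_inj (@perm_inj _ s)).
Qed.

End Form.
Section Rho.
Variable C : numClosedFieldType.
Local Notation idx := mxtens_index.

Lemma projE N (v : 'cV[C]_N) p q : proj v p q = v p 0 * (v q 0)^*.
Proof. by rewrite mxE big_ord1 adjmxE. Qed.

Definition Xd d (a b i j : 'I_d) : C := ((a == i) && (b == j))%:R.

Lemma sum_pairs d (a b : 'I_d) (F : 'I_d -> 'I_d -> C) :
  \sum_(i < d) \sum_(j < d | (i < j)%N) (Xd a b i j * F i j) = (a < b)%N%:R * F a b.
Proof.
transitivity (\sum_(i < d) (i == a)%:R * \sum_(j < d | (i < j)%N) ((j == b)%:R * F i j)).
  apply: eq_bigr => i _; rewrite big_distrr /=; apply: eq_bigr => j _.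
  by rewrite /Xd -mulnb natrM -mulrA [a == i]eq_sym [b == j]eq_sym.
rewrite sum_dl big_mkcond /=.
rewrite (eq_bigr (fun j => (j == b)%:R * (if (a < j)%N then F a j else 0))); last first.
  by move=> j _; case: ifP; rewrite ?mulr0.
by rewrite sum_dl; case: ifP; rewrite ?mul1r ?mul0r.
Qed.

Lemma sum_pairs' d (a b : 'I_d) (F : 'I_d -> 'I_d -> C) :
  \sum_(i < d) \sum_(j < d | (i < j)%N) (Xd a b j i * F i j) = (b < a)%N%:R * F b a.
Proof.
rewrite -sum_pairs; apply: eq_bigr => i _; apply: eq_bigr => j _.
by rewrite /Xd andbC.
Qed.

Lemma part d (a b c e : 'I_d) (s : C) :
  \sum_(i < d) \sum_(j < d | (i < j)%N) ((Xd a b i j + s * Xd a b j i) * (Xd c e i j + s * Xd c e j i))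
  = (a < b)%N%:R * (Xd c e a b + s * Xd c e b a) + s * ((b < a)%N%:R * (Xd c e b a + s * Xd c e a b)).
Proof.
under eq_bigr => i _ do under eq_bigr => j _ do rewrite mulrDl -mulrA.
under eq_bigr => i _ do rewrite big_split /=.
rewrite big_split /= sum_pairs; congr (_ + _).
under eq_bigr => i _ do rewrite -big_distrr /=.
by rewrite -big_distrr /= sum_pairs'.
Qed.

Lemma XdC d (a b i j : 'I_d) : (Xd a b i j)^* = Xd a b i j.
Proof. by rewrite /Xd rmorph_nat. Qed.

Lemma addmxE' p q (A B : 'M[C]_(p, q)) i j : (A + B) i j = A i j + B i j.
Proof. by rewrite mxE. Qed.
Lemma oppmxE' p q (A : 'M[C]_(p, q)) i j : (- A) i j = - A i j.
Proof. by rewrite mxE. Qed.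
Lemma scalemxE' p q c (A : 'M[C]_(p, q)) i j : (c *: A) i j = c * A i j.
Proof. by rewrite mxE. Qed.

Lemma ketmE d (i j a b : 'I_d) :
  (ket C i j - ket C j i) (idx (a, b)) 0 = Xd a b i j + (-1) * Xd a b j i.
Proof. by rewrite addmxE' oppmxE' !ketE mulN1r. Qed.

Lemma ketpE d (i j a b : 'I_d) :
  (ket C i j + ket C j i) (idx (a, b)) 0 = Xd a b i j + 1 * Xd a b j i.
Proof. by rewrite addmxE' !ketE mul1r. Qed.

Lemma diag_sum d (a b c e : 'I_d) :
  \sum_i (Xd a b i i * Xd c e i i) = Xd a b a a * Xd c e a a.
Proof.
rewrite (eq_bigr (fun i => (i == a)%:R * (Xd a b a a * Xd c e a a))) ?sum_dl // => i _.
case: (eqVneq i a) => [->|ia]; first by rewrite mul1r.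
by rewrite /Xd [a == i]eq_sym (negPf ia) !mul0r.
Qed.

Lemma rhoE d (a0 b0 c0 : C) (a b c e : 'I_d) :
  rho_abc d a0 b0 c0 (idx (a, b)) (idx (c, e)) = formE a b c e a0 ((b0 + c0) / 2) ((c0 - b0) / 2).
Proof.
have -> : rho_abc d a0 b0 c0 (idx (a, b)) (idx (c, e)) =
  a0 * (\sum_i (Xd a b i i * Xd c e i i))
  + b0 * (2^-1 * \sum_(i < d) \sum_(j < d | (i < j)%N) ((Xd a b i j + (-1) * Xd a b j i) * (Xd c e i j + (-1) * Xd c e j i)))
  + c0 * (2^-1 * \sum_(i < d) \sum_(j < d | (i < j)%N) ((Xd a b i j + 1 * Xd a b j i) * (Xd c e i j + 1 * Xd c e j i))).
  rewrite /rho_abc !addmxE' !scalemxE' !summxE; congr (_ * _ + _ * _ + _ * _).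
  - by apply: eq_bigr => i _; rewrite projE !ketE rmorph_nat.
  - rewrite big_distrr /=; apply: eq_bigr => i _; rewrite summxE big_distrr /=.
    apply: eq_bigr => j _; rewrite scalemxE' projE !ketmE rmorphD rmorphM rmorphN1 /= !XdC //.
  - rewrite big_distrr /=; apply: eq_bigr => i _; rewrite summxE big_distrr /=.
    apply: eq_bigr => j _; rewrite scalemxE' projE !ketpE rmorphD rmorphM rmorph1 /= !XdC //.
rewrite !part diag_sum /formE /Xd !eqxx /=.
case: (ltngtP a b) => [lt|gt|/val_inj eq].
- have ab : (a == b) = false by apply/eqP => h; move: lt; rewrite h ltnn.
  have ba : (b == a) = false by rewrite eq_sym.
  rewrite ab ba /=.
  by case: (c == a); case: (e == b); case: (c == b); case: (e == a); rewrite /=; ring.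
- have ab : (a == b) = false by apply/eqP => h; move: gt; rewrite h ltnn.
  have ba : (b == a) = false by rewrite eq_sym.
  rewrite ab ba /=.
  by case: (c == a); case: (e == b); case: (c == b); case: (e == a); rewrite /=; ring.
- subst b; rewrite eqxx /=.
  by case: (c == a); case: (e == a); rewrite /=; ring.
Qed.

End Rho.
Section Main.
Variable C : numClosedFieldType.
Local Notation idx := mxtens_index.

Lemma form_rho d (a0 b0 c0 : C) : rho_abc d a0 b0 c0 = form d a0 ((b0 + c0) / 2) ((c0 - b0) / 2).
Proof.
apply/matrixP => p q; case: (mxtens_indexP p) => a b; case: (mxtens_indexP q) => c e.
by rewrite rhoE formI.
Qed.

Lemma formZ d (t A P Q : C) : t *: form d A P Q = form d (t * A) (t * P) (t * Q).
Proof.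
apply/matrixP => p q; case: (mxtens_indexP p) => a b; case: (mxtens_indexP q) => c e.
by rewrite scalemxE' !formI /formE; ring.
Qed.

Lemma sum_neq d (k : 'I_d) : \sum_(l < d) ((k != l)%:R : C) = (d - 1)%:R.
Proof.
have d0 : (0 < d)%N by apply: leq_ltn_trans (ltn_ord k).
rewrite (eq_bigr (fun l => 1 - (l == k)%:R * 1)) => [|l _]; last first.
  by rewrite eq_sym mulr1; case: (l == k); rewrite ?subr0 ?subrr.
by rewrite sumrB sumr_const card_ord sum_dl natrB.
Qed.

Lemma fsum_form d (A P Q : C) : fsum (form d A P Q) = d%:R * A + (d * (d - 1))%:R * Q.
Proof.
rewrite /fsum; under eq_bigr => k _ do under eq_bigr => l _ do rewrite formI /formE !eqxx /= ?andbT.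
under eq_bigr => k _ do rewrite big_split /= big_split /=.
rewrite !big_split /=.
have h1 : \sum_(k < d) \sum_(l < d) (((k == l) && (l == k))%:R * A) = d%:R * A.
  under eq_bigr => k _ do (rewrite (eq_bigr (fun l => (l == k)%:R * A)); last by move=> l _; rewrite [l == k]eq_sym andbb).
  by under eq_bigr => k _ do rewrite sum_dl; rewrite sumr_const card_ord mulr_natl.
have h2 : \sum_(k < d) \sum_(l < d) (((k != l) && (l == k) && (k == l))%:R * P) = 0.
  by apply: big1 => k _; apply: big1 => l _; case: (eqVneq k l); rewrite ?mul0r.
have h3 : \sum_(k < d) \sum_(l < d) ((k != l)%:R * Q) = (d * (d - 1))%:R * Q.
  under eq_bigr => k _ do rewrite -big_distrl /= sum_neq.
  by rewrite -big_distrl /= sumr_const card_ord natrM mulr_natl.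
by rewrite h1 h2 h3 addr0.
Qed.

Lemma tr_form d (A P Q : C) : \tr (form d A P Q) = d%:R * A + (d * (d - 1))%:R * P.
Proof.
rewrite /mxtrace sum_idx.
under eq_bigr => k _ do under eq_bigr => l _ do rewrite formI /formE !eqxx /= ?andbT.
under eq_bigr => k _ do rewrite big_split /= big_split /=.
rewrite !big_split /=.
have h1 : \sum_(k < d) \sum_(l < d) (((k == l) && (l == k))%:R * A) = d%:R * A.
  under eq_bigr => k _ do (rewrite (eq_bigr (fun l => (l == k)%:R * A)); last by move=> l _; rewrite [l == k]eq_sym andbb).
  by under eq_bigr => k _ do rewrite sum_dl; rewrite sumr_const card_ord mulr_natl.
have h2 : \sum_(k < d) \sum_(l < d) (((k != l) && (k == l) && (l == k))%:R * Q) = 0.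
  by apply: big1 => k _; apply: big1 => l _; case: (eqVneq k l); rewrite ?mul0r.
have h3 : \sum_(k < d) \sum_(l < d) ((k != l)%:R * P) = (d * (d - 1))%:R * P.
  under eq_bigr => k _ do rewrite -big_distrl /= sum_neq.
  by rewrite -big_distrl /= sumr_const card_ord natrM mulr_natl.
by rewrite h1 h2 h3 addr0.
Qed.

End Main.
Section Main2.
Variable C : numClosedFieldType.
Local Notation idx := mxtens_index.

Lemma bilinE N (u w : 'cV[C]_N) (A : 'M[C]_N) :
  (adjmx u *m A *m w) 0 0 = \sum_p \sum_q (u p 0)^* * A p q * w q 0.
Proof.
rewrite mxE; rewrite exchange_big /=; apply: eq_bigr => q _.
rewrite mxE big_distrl /=; apply: eq_bigr => p _; by rewrite adjmxE.
Qed.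

Lemma quad_delta N (A : 'M[C]_N) (p q : 'I_N) :
  (adjmx (delta_mx p 0 : 'cV[C]_N) *m A *m (delta_mx q 0 : 'cV[C]_N)) 0 0 = A p q.
Proof.
rewrite bilinE.
under eq_bigr => r _ do under eq_bigr => s _ do rewrite !deltaE.
under eq_bigr => r _ do rewrite (eq_bigr (fun s => ((r == p)%:R)^* * A r s * (s == q)%:R)) // sum_dr.
by under eq_bigr => r _ do rewrite rmorph_nat; rewrite sum_dl.
Qed.

Lemma quad2 N (A : 'M[C]_N) (p q : 'I_N) :
  (adjmx (delta_mx p 0 + delta_mx q 0 : 'cV[C]_N) *m A *m (delta_mx p 0 + delta_mx q 0 : 'cV[C]_N)) 0 0
  = A p p + A p q + A q p + A q q.
Proof.
rewrite adjmxD !mulmxDl !mulmxDr ?mulmxDl !addmxE' !quad_delta; ring.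
Qed.

Lemma psd_twirl d (Y : 'M[C]_(d * d)) : psd Y -> psd (twirl Y).
Proof. by move=> HY; apply: psd_sum => g _; apply: psd_congr. Qed.

Lemma twirl_main d (Y : 'M[C]_(d * d)) : psd Y -> fsum Y < 0 ->
  (1 < d)%N /\ exists A P Q : C, [/\ 0 <= A, 0 < P, Q < 0 & twirl Y = form d A P Q].
Proof.
move=> HY Hf.
have Ht := psd_twirl HY.
have N40 : 0 < N4 C d by rewrite /N4 ltr0n card_ffun card_ord expn_gt0.
have Np0 : 0 < (#|{: {perm 'I_d}}|%:R : C).
  by rewrite ltr0n; apply/card_gt0P; exists 1%g.
have Hft : fsum (twirl Y) < 0 by rewrite fsum_twirl !pmulr_rlt0.
case: d Y HY Hf Ht Hft {N40 Np0} => [|[|d]] Y HY Hf Ht Hft.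
- by move: Hf; rewrite /fsum big_ord0 ltxx.
- move: Hf; rewrite /fsum !big_ord1 => Hf.
  by have := psd_diag (idx (ord0, ord0)) HY => h; move: (le_lt_trans h Hf); rewrite ltxx.
split => //.
move: (twirl_form Y) => /=; set o0 := (ord0 : 'I_d.+2); set o1 := lift ord0 ord0.
set A := _ * Gs Y o0 o0 o0 o0; set P := _ * Gs Y o0 o1 o0 o1; set Q := _ * Gs Y o0 o1 o1 o0.
move=> Tf; rewrite Tf in Ht Hft.
exists A, P, Q.
have HA : 0 <= A.
  by have := psd_diag (idx (o0, o0)) Ht; rewrite formI /formE !eqxx /= mul1r !mul0r !addr0.
have o01 : (o0 == o1) = false by [].
have o10 : (o1 == o0) = false by [].
have HQ : Q < 0.
  move: Hft; rewrite fsum_form => h.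
  have h2 : ((d.+2 * (d.+2 - 1))%:R * Q < 0).
    apply: le_lt_trans h; rewrite lerDr; apply: mulr_ge0 => //; exact: ler0n.
  by move: h2; rewrite pmulr_rlt0 // ltr0n.
have HP : 0 < P.
  have HP0 : 0 <= P.
    by have := psd_diag (idx (o0, o1)) Ht; rewrite formI /formE !eqxx o01 /= !mul0r add0r addr0 mul1r.
  have h := (proj2 Ht) (delta_mx (idx (o0, o1)) 0 + delta_mx (idx (o1, o0)) 0).
  rewrite quad2 !formI /formE !eqxx o01 o10 /= in h.
  rewrite lt_def HP0 andbT; apply/eqP => P0; rewrite P0 in h.
  move: h; rewrite ?mul0r ?mul1r ?add0r ?addr0 ?mulr0 ?add0r => h.
  have hQ2 : Q + Q < 0 by rewrite -[0](addr0 0); apply: ltrD.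
  by move: (le_lt_trans h hQ2); rewrite ltxx.
by split.
Qed.

End Main2.
Section Final.
Variable C : numClosedFieldType.
Local Notation idx := mxtens_index.

Lemma twirl_final d (Y : 'M[C]_(d * d)) : psd Y -> fsum Y < 0 ->
  exists a0 b0 c0 t : C,
    [/\ a0 \is Num.real, b0 \is Num.real, c0 \is Num.real, 0 < t &
    [/\ d%:R * a0 + (b0 + c0) * ((d * (d - 1))%:R / 2) = 1,
        density (rho_abc d a0 b0 c0), ~ psd (ptrans (rho_abc d a0 b0 c0))
      & twirl Y = t *: rho_abc d a0 b0 c0]].
Proof.
move=> HY Hf; have [d2 [A [P [Q [HA HP HQ Tf]]]]] := twirl_main HY Hf.
have Ht := psd_twirl HY; rewrite Tf in Ht.
have Hft : fsum (form d A P Q) < 0.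
  by rewrite -Tf fsum_twirl !pmulr_rlt0 // ?ltr0n ?card_ffun ?card_ord ?expn_gt0 //;
     apply/card_gt0P; exists 1%g.
set t := d%:R * A + (d * (d - 1))%:R * P.
have dd : (0 < d * (d - 1))%N by rewrite muln_gt0; case: d d2 {Y HY Hf Tf Ht Hft t} => [|[|]].
have t0 : 0 < t.
  by rewrite /t ltr_wpDl ?mulr_ge0 ?ler0n // pmulr_rgt0 // ltr0n.
have tn0 : t != 0 by rewrite gt_eqF.
have two0 : (2 : C) != 0 by rewrite pnatr_eq0.
have Ar : A \is Num.real by rewrite ger0_real.
have Pr : P \is Num.real by rewrite gtr0_real.
have Qr : Q \is Num.real by rewrite ltr0_real.
have tr : t^-1 \is Num.real by rewrite rpredV gtr0_real.
have ht : d%:R * A + (d * (d - 1))%:R * P = t by [].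
clearbody t.
exists (A / t), ((P - Q) / t), ((P + Q) / t), t.
have Erho : rho_abc d (A / t) ((P - Q) / t) ((P + Q) / t) = form d (A / t) (P / t) (Q / t).
  rewrite form_rho; congr (form _ _ _ _); field => //.
have ET : form d A P Q = t *: form d (A / t) (P / t) (Q / t).
  by rewrite formZ; congr (form _ _ _ _); field.
split; rewrite ?rpredM ?rpredB ?rpredD //.
split.
- have -> : d%:R * (A / t) + ((P - Q) / t + (P + Q) / t) * ((d * (d - 1))%:R / 2)
      = (d%:R * A + (d * (d - 1))%:R * P) / t by field.
  by rewrite ht divff.
- split.
    rewrite Erho -[form _ _ _ _](scalerK tn0) -ET; apply: psdZ => //.
    by rewrite invr_ge0 ltW.
  rewrite Erho tr_form.
  have -> : d%:R * (A / t) + (d * (d - 1))%:R * (P / t)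
      = (d%:R * A + (d * (d - 1))%:R * P) / t by field.
  by rewrite ht divff.
- move=> [_ Hv]; have := Hv (vPhi C d); rewrite quad_ptrans Erho fsum_form.
  have -> : d%:R * (A / t) + (d * (d - 1))%:R * (Q / t) = fsum (form d A P Q) / t.
    by rewrite fsum_form; field.
  have hn : fsum (form d A P Q) / t < 0 by rewrite pmulr_llt0 ?invr_gt0.
  by move=> h; move: (le_lt_trans h hn); rewrite ltxx.
- by rewrite Tf ET Erho.
Qed.

End Final.
Section Filter.
Variable C : numClosedFieldType.
Local Notation idx := mxtens_index.
Variables (n m : nat) (v : 'cV[C]_(n * m)).
Local Notation d := (minn n m).
Definition V (i : 'I_n) (j : 'I_m) := v (idx (i, j)) 0.

Definition Afil : 'M[C]_(d, n) := \matrix_(k, i)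
  if (n <= m)%N then ((k : nat) == i)%:R else (V i (widen_ord (geq_minr n m) k))^*.
Definition Bfil : 'M[C]_(d, m) := \matrix_(k, j)
  if (n <= m)%N then V (widen_ord (geq_minl n m) k) j else ((k : nat) == j)%:R.

Lemma sum_nat_delta (T : 'I_d -> C) (i : nat) (Hi : (i < d)%N) :
  \sum_(k < d) (((k : nat) == i)%:R * T k) = T (Ordinal Hi).
Proof.
rewrite -(sum_dl (Ordinal Hi)); apply: eq_bigr => k _; done.
Qed.

Lemma I1 i j : \sum_(k < d) (Afil k i * (Bfil k j)^*) = (V i j)^*.
Proof.
case: (boolP (n <= m)%N) => nm.
  have Hi : (i < d)%N by rewrite (minn_idPl nm).
  under eq_bigr => k _ do rewrite !mxE nm.
  rewrite sum_nat_delta; congr (_^*); rewrite /V; congr (v (idx (_, _)) 0); exact: val_inj.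
have mn : (m <= n)%N by apply: ltnW; rewrite ltnNge.
have Hj : (j < d)%N by rewrite (minn_idPr mn).
under eq_bigr => k _ do rewrite !mxE (negPf nm) rmorph_nat mulrC.
rewrite sum_nat_delta; congr (_^*); rewrite /V; congr (v (idx (_, _)) 0); exact: val_inj.
Qed.

Lemma I2 i j : \sum_(k < d) ((Afil k i)^* * Bfil k j) = V i j.
Proof.
rewrite -[RHS]conjCK -I1 rmorph_sum; apply: eq_bigr => k _.
by rewrite rmorphM /= conjCK mulrC.
Qed.

Lemma sum_in4 (T0 T1 T2 T3 T4 : finType) (F : T0 -> T1 -> T2 -> T3 -> T4 -> C) :
  \sum_a \sum_b \sum_c \sum_e \sum_f F a b c e f
  = \sum_b \sum_c \sum_e \sum_f \sum_a F a b c e f.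
Proof.
rewrite exchange_big; apply: eq_bigr => b _; rewrite exchange_big; apply: eq_bigr => c _.
rewrite exchange_big; apply: eq_bigr => e _; by rewrite exchange_big.
Qed.

Lemma fsum_filter (rho : 'M[C]_(n * m)) :
  fsum ((Afil *t Bfil) *m rho *m adjmx (Afil *t Bfil)) = (adjmx v *m ptrans rho *m v) 0 0.
Proof.
transitivity (\sum_(k < d) \sum_(l < d) \sum_(i < n) \sum_(j < m) \sum_(i' < n) \sum_(j' < m)
   ((Afil k i * Bfil l j) * rho (idx (i, j)) (idx (i', j')) * (Afil l i' * Bfil k j')^*)).
  rewrite /fsum; apply: eq_bigr => k _; apply: eq_bigr => l _.
  rewrite conj_entry sum_idx; apply: eq_bigr => i _; apply: eq_bigr => j _.
  rewrite sum_idx; apply: eq_bigr => i' _; apply: eq_bigr => j' _.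
  by rewrite !tensmxE.
under eq_bigr => k _ do rewrite sum_in4.
rewrite sum_in4.
transitivity (\sum_(i < n) \sum_(j < m) \sum_(i' < n) \sum_(j' < m)
   ((V i j')^* * rho (idx (i, j)) (idx (i', j')) * V i' j)).
  apply: eq_bigr => i _; apply: eq_bigr => j _; apply: eq_bigr => i' _; apply: eq_bigr => j' _.
  rewrite -I1 -I2 mulr_suml mulr_suml; apply: eq_bigr => k _.
  rewrite mulr_sumr; apply: eq_bigr => l _.
  rewrite rmorphM /=; ring.
rewrite quadE [RHS]sum_idx; apply: eq_bigr => i _.
under [RHS]eq_bigr => j' _ do rewrite sum_idx.
under [RHS]eq_bigr => j' _ do rewrite exchange_big /=.
rewrite [RHS]exchange_big /=; apply: eq_bigr => j _.
rewrite [RHS]exchange_big /=; apply: eq_bigr => i' _; apply: eq_bigr => j' _.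
by rewrite ptransE.
Qed.

End Filter.
Section Locc.
Variable C : numClosedFieldType.

Definition twloc d : 'M[C]_(d * d) -> 'M[C]_(d * d) :=
  fun rho => \sum_(i < #|{: G d}|)
   (fun g : 'I_#|{: G d}| => fun r : 'M[C]_(d * d) => \sum_(j < 1)
       (fun _ : 'I_1 => @id 'M[C]_(d * d)) j
       (((1%:M : 'M[C]_d) *t Umx C (enum_val g)) *m r *m adjmx ((1%:M : 'M[C]_d) *t Umx C (enum_val g)))) i
   ((Umx C (enum_val i) *t (1%:M : 'M[C]_d)) *m rho *m adjmx (Umx C (enum_val i) *t (1%:M : 'M[C]_d))).

Lemma locc_twloc d : locc (@twloc d).
Proof.
exact: (locc_alice (fun i : 'I_#|{: G d}| => Umx C (enum_val i))
          (fun g => locc_bob (fun _ : 'I_1 => Umx C (enum_val g)) (fun _ => locc_done C d d))).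
Qed.

Lemma conj2 p q r (X2 : 'M[C]_(p, q)) (X1 : 'M[C]_(q, r)) (Y : 'M[C]_r) :
  X2 *m (X1 *m Y *m adjmx X1) *m adjmx X2 = (X2 *m X1) *m Y *m adjmx (X2 *m X1).
Proof. by rewrite adjmx_mul !mulmxA. Qed.

Lemma twlocE d (Y : 'M[C]_(d * d)) : @twloc d Y = twirl Y.
Proof.
rewrite /twloc /twirl.
transitivity (\sum_(g in {: G d}) (MU C g *m Y *m adjmx (MU C g))); last first.
  by apply: eq_bigl => g; rewrite inE.
rewrite [RHS]big_enum_val; apply: eq_bigr => i _.
by rewrite big_ord1 /= conj2 tensmx_mul mul1mx mulmx1.
Qed.

End Locc.

Lemma Re_real (R : rcfType) (x : R[i]) : x \is Num.real -> real_complex R (complex.Re x) = x.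
Proof.
case: x => a b; rewrite realE !lecE /= => /orP[/andP[/eqP h _]|/andP[/eqP h _]];
  by rewrite -complexr0 ?h.
Qed.

Theorem theorem1 (R : realType) (n m : nat) (rho : 'M[R[i]]_(n * m)) :
  density rho -> ~ psd (ptrans rho) ->
  exists d : nat, (d <= minn n m)%N /\
  exists Phi : 'M[R[i]]_(n * m) -> 'M[R[i]]_(d * d),
    locc Phi /\
    exists a b c : R,
      d%:R * a + (b + c) * ((d * (d - 1))%:R / 2) = 1 /\
      density (rho_abc d (rC a) (rC b) (rC c)) /\
      ~ psd (ptrans (rho_abc d (rC a) (rC b) (rC c))) /\
      exists t : R, 0 < t /\ Phi rho = rC t *: rho_abc d (rC a) (rC b) (rC c).
Proof.
move=> Hd Hnpt.
have Hh : hermitian_mx (ptrans rho) := ptrans_herm (proj1 (proj1 Hd)).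
have [v Hv] := npt_vec Hh Hnpt.
set Y := (Afil v *t Bfil v) *m rho *m adjmx (Afil v *t Bfil v).
have HY : psd Y by apply: psd_congr; exact: (proj1 Hd).
have HfY : fsum Y < 0 by rewrite /Y fsum_filter.
have [a0 [b0 [c0 [t [ar br cr t0 [Hn Hden Hnp Heq]]]]]] := twirl_final HY HfY.
exists (minn n m); split => //.
exists (fun rho0 => \sum_(i < 1)
   (fun _ : 'I_1 => fun r : 'M[R[i]]_(n * minn n m) => \sum_(i0 < 1)
       (fun _ : 'I_1 => @twloc _ (minn n m)) i0
       ((Afil v *t (1%:M : 'M[R[i]]_(minn n m))) *m r *m adjmx (Afil v *t (1%:M : 'M[R[i]]_(minn n m))))) i
   (((1%:M : 'M[R[i]]_n) *t Bfil v) *m rho0 *m adjmx ((1%:M : 'M[R[i]]_n) *t Bfil v))).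
split.
  exact: (locc_bob (fun _ : 'I_1 => Bfil v)
           (fun _ => locc_alice (fun _ : 'I_1 => Afil v) (fun _ => locc_twloc _ _))).
have tr : t \is Num.real by rewrite gtr0_real.
exists (complex.Re a0), (complex.Re b0), (complex.Re c0).
have ea : rC (complex.Re a0) = a0 := Re_real ar.
have eb : rC (complex.Re b0) = b0 := Re_real br.
have ec : rC (complex.Re c0) = c0 := Re_real cr.
have et : rC (complex.Re t) = t := Re_real tr.
rewrite ea eb ec.
split.
  apply: (@complexI R); rewrite !rmorphD !rmorphM !rmorphD fmorphV !rmorph_nat rmorph1.
  rewrite /= (Re_real ar) (Re_real br) (Re_real cr) -natrM; exact: Hn.
split; first exact: Hden.
split; first exact: Hnp.
exists (complex.Re t); split.
  by move: t0; rewrite ltcE /= => /andP[].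
rewrite et -Heq !big_ord1 twlocE conj2 tensmx_mul mul1mx mulmx1.
by [].
Qed.
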